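(* Let $G$ be a finite group with $d(G)\geq 2$, and assume that $G$ is $2$-flexible. Then $G$ is $1$-flexible if and only if $\mathrm{Cyc}(G)=1$.
   Context: For a finite group $H$, $d(H)$ denotes the minimal size of a generating set of $H$. For an integer $1 \leq k \leq d(G)$, $G$ is called $k$-flexible if for any $x_1,\dots,x_k \in G$ with $d(\langle x_1,\dots,x_k\rangle)=k$ there exist $x_{k+1},\dots,x_{d(G)} \in G$ such that $\langle x_1,\dots,x_{d(G)}\rangle = G$. The cycliciser of $G$ is $\mathrm{Cyc}(G) = \{c \in G \mid \langle c,g\rangle \text{ is cyclic for all } g \in G\}$. *)

(* Defs.v *)
From mathcomp Require Import all_boot all_fingroup all_solvable.
Set Implicit Arguments. Unset Strict Implicit. Unset Printing Implicit Defensive.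
Local Open Scope group_scope.

(* d(H) is MathComp's gen_rank H (notation 'm(H)), abelian.v:
   the minimal cardinality of a generating set of H. *)

Definition flexible (gT : finGroupType) (G : {group gT}) (k : nat) : Prop :=
  forall x : k.-tuple gT,
    (forall i, i \in x -> i \in G) ->
    gen_rank <<[set z | z \in x]>> = k ->
    exists y : (gen_rank G - k).-tuple gT,
      (forall i, i \in y -> i \in G) /\
      <<[set z | z \in x] :|: [set z | z \in y]>> = G.

Definition cycliciser (gT : finGroupType) (G : {group gT}) : {set gT} :=
  [set c in G | [forall g in G, cyclic <<[set c; g]>>]].

(* Main.v *)
Require Import Defs.
From mathcomp Require Import all_boot all_fingroup all_solvable.
From mathcomp Require Import zify.
Local Open Scope group_scope.

Lemma grank_cyclic (gT : finGroupType) (H : {group gT}) :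
  cyclic H = (gen_rank H <= 1).
Proof.
apply/idP/idP.
  case/cyclicP=> z ->; rewrite /cycle.
  by apply: leq_trans (grank_min _) _; rewrite cards1.
case: (grank_witness H) => B defH <-.
rewrite leq_eqVlt ltnS leqn0 cards_eq0; case/orP.
  by case/cards1P=> z defB; rewrite -defH defB cycle_cyclic.
by move/eqP=> B0; rewrite -defH B0 gen0 cyclic1.
Qed.

Lemma grank_eq0 (gT : finGroupType) (H : {group gT}) :
  (gen_rank H == 0) = (H :==: 1).
Proof.
apply/idP/idP.
  case: (grank_witness H) => B defH <-; rewrite cards_eq0 => /eqP B0.
  by rewrite -defH B0 gen0.
move/eqP=> ->; rewrite -leqn0 -gen0.
by apply: leq_trans (grank_min _) _; rewrite cards0.
Qed.

Theorem lemma2p5 (gT : finGroupType) (G : {group gT}) :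
  2 <= gen_rank G -> flexible G 2 ->
  (flexible G 1 <-> cycliciser G = 1).
Proof.
move=> m2 F2; split.
- move=> F1; apply/eqP; rewrite eqEsubset andbC sub1set inE group1 /=.
  apply/andP; split.
    apply/forallP => g; apply/implyP => gG.
    have -> : <<[set 1; g]>> = <[g]>.
      apply/eqP; rewrite eqEsubset gen_subG subUset !sub1set group1 cycle_id /=.
      by rewrite genS // subsetUr.
    exact: cycle_cyclic.
  apply/subsetP => c.
  rewrite inE => /andP [cG /forallP cyc]; rewrite inE; apply/negPn/negP => nc1.
  have Xc : [set z | z \in [tuple c]] = [set c] by apply/setP => z; rewrite !inE.
  have [| |y [yG defG]] := F1 [tuple c].
  - by move=> i; rewrite inE => /eqP ->.
  - rewrite Xc; apply/eqP; rewrite eqn_leq.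
    rewrite (leq_trans (grank_min _)) ?cards1 //=.
    rewrite lt0n; have := @grank_eq0 _ <[c]>%G; rewrite /= cycle_eq1 (negbTE nc1) => -> //.
  rewrite Xc in defG.
  case: y yG defG => [[|y0 ys] szy] yG defG.
    by have := szy; rewrite /= eq_sym subn_eq0 leqNgt (leq_trans _ m2).
  have y0G : y0 \in G by apply: yG; rewrite inE eqxx.
  have := cyc y0; rewrite y0G /= => /cyclicP [z defz].
  have eG : G :=: <<[set z] :|: [set w | w \in ys]>>.
    rewrite -defG.
    transitivity <<[set c; y0] :|: [set w | w \in ys]>>.
      congr <<_>>; apply/setP => w; rewrite !inE /=.
      by rewrite orbA.
    by rewrite -!joingE -joing_idl defz /cycle joing_idl.
  have := grank_min ([set z] :|: [set w | w \in ys]); rewrite -eG => le.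
  have hc : #|z |: [set w | w \in ys]| <= (size ys).+1.
    by rewrite cardsU1 cardsE -add1n leq_add ?leq_b1 ?card_size.
  have := leq_trans le hc; have := eqP szy; rewrite /= => ->.
  by move: m2; case: ('m(G)) => [|[|k]] //= _; rewrite subn1 ltnn.
- move=> Hc x xG mx.
  case: x xG mx => [[|c [|? ?]] sz] // xG mx.
  have Xc : [set z | z \in Tuple sz] = [set c] by apply/setP => z; rewrite !inE.
  rewrite Xc in mx *.
  have cG : c \in G by apply: xG; rewrite inE.
  have nc1 : c != 1.
    apply/negP => /eqP c1; move: mx; rewrite c1.
    have e : <<[set (1:gT)]>> = 1 := cycle1 gT.
    rewrite e; have := @grank_eq0 gT [1 gT]%G; rewrite eqxx => /eqP.
    by move=> ->.
  have : c \notin cycliciser G by rewrite Hc inE.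
  rewrite inE cG /= negb_forall => /existsP [g]; rewrite negb_imply => /andP [gG ncyc].
  have [| |y [yG defG]] := F2 [tuple c; g].
  - by move=> i; rewrite !inE => /orP [] /eqP ->.
  - have -> : [set z | z \in [tuple c; g]] = [set c; g] by apply/setP => z; rewrite !inE.
    apply/eqP; rewrite eqn_leq (leq_trans (grank_min _)) ?cards2 ?ltnS ?leq_b1 //=.
    by rewrite ltnNge -(@grank_cyclic _ <<[set c; g]>>%G).
  have szy : size (g :: y) == 'm(G) - 1.
    rewrite /= size_tuple; apply/eqP.
    by move: m2; case: ('m(G)) => [|[|k]] //= _; rewrite !subSS subn0.
  exists (Tuple szy); split.
    by move=> i; rewrite inE => /orP [/eqP -> //|]; apply: yG.
  apply: (etrans _ defG); congr <<_>>; apply/setP => z; rewrite !inE /=.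
  by rewrite orbA.
Qed.
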